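(* Let $n,d$ be natural numbers and $h$ an integer. Let $(z_j)$ be a sequence of Gaussian integers such that every two consecutive terms satisfy $|z_{j+1}-z_j|=1$, and suppose there are indices $j_1,j_2$ with $z_{j_2}-z_{j_1}=n+ih$. If $k(n,d)\geq |r(n,d)|+|h|+1$, then there exist indices $j_3,j_4$ with $z_{j_3}-z_{j_4}=d$.
   Context: For integers $n$ and $d\ge1$, $k(n,d)$ and $r(n,d)$ are the unique integers with $n=k(n,d)\,d+r(n,d)$ and $r(n,d)\in\left[-\lfloor d/2\rfloor,\ \lceil d/2\rceil-1\right]$. *)

(* Defs.v *)
From mathcomp Require Import all_boot all_order all_algebra.
Set Implicit Arguments. Unset Strict Implicit. Unset Printing Implicit Defensive.
Import Order.TTheory GRing.Theory Num.Theory.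
Local Open Scope ring_scope.

(* Gaussian integers a + i b are represented as pairs (a, b) : int * int. *)
Definition gauss := (int * int)%type.

Definition gsub (z w : gauss) : gauss := (z.1 - w.1, z.2 - w.2).

Definition gnorm2 (z : gauss) : int := z.1 ^+ 2 + z.2 ^+ 2.

(* k(n,d) and r(n,d): n = k d + r with r in [-floor(d/2), ceil(d/2) - 1].
   Explicitly k = floor((n + floor(d/2)) / d), r = n - k d  (for d >= 1). *)
Definition kq (n d : int) : int := ((n + (d %/ 2)%Z) %/ d)%Z.
Definition rq (n d : int) : int := n - kq n d * d.

(* Main.v *)
Require Import Defs.
From mathcomp Require Import all_boot all_order all_algebra.
From mathcomp Require Import zify.
Import Order.TTheory GRing.Theory Num.Theory.
Local Open Scope ring_scope.
Set Implicit Arguments. Unset Strict Implicit.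

Lemma sq1 (p q : int) : p * p + q * q = 1 ->
  (p = 1 /\ q = 0) \/ (p = -1 /\ q = 0) \/ (p = 0 /\ q = 1) \/ (p = 0 /\ q = -1).
Proof.
move=> H.
have hp : 0 <= p * p by nia.
have hq : 0 <= q * q by nia.
have p1 : -1 <= p <= 1 by nia.
have q1 : -1 <= q <= 1 by nia.
have : p = -1 \/ p = 0 \/ p = 1 by lia.
have : q = -1 \/ q = 0 \/ q = 1 by lia.
by case=> [Eq|[Eq|Eq]]; rewrite Eq in H *; case=> [Ep|[Ep|Ep]]; rewrite Ep in H *; move: H; rewrite /=; lia.
Qed.

Definition cr (a b : gauss) (x y : int) : int :=
  if (a.1 == b.1) && (x < a.1) then
    (if (a.2 == y) && (b.2 == y + 1) then 1
     else if (a.2 == y + 1) && (b.2 == y) then -1 else 0)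
  else 0.

Definition inR (p : gauss) (x y : int) : int :=
  if (p.2 == y + 1) && (x < p.1) then 1 else 0.

Lemma unit_step (a b : gauss) : gnorm2 (gsub b a) = 1 ->
  (b.1 = a.1 + 1 /\ b.2 = a.2) \/ (b.1 = a.1 - 1 /\ b.2 = a.2) \/
  (b.1 = a.1 /\ b.2 = a.2 + 1) \/ (b.1 = a.1 /\ b.2 = a.2 - 1).
Proof.
rewrite /gnorm2 /gsub /= !expr2 => /sq1; lia.
Qed.

Lemma cr_V (a b : gauss) (x y : int) : gnorm2 (gsub b a) = 1 -> ~ (a.1 = x /\ a.2 = y + 1) ->
  ~ (b.1 = x /\ b.2 = y + 1) ->
  cr a b x y - cr a b x (y+1) = inR b x y - inR a x y.
Proof.
move=> /unit_step H Ha Hb; rewrite /cr /inR.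
repeat case: ifP; move=> *; lia. Qed.

Lemma cr_H (a b : gauss) (x y : int) : ~ (a.1 = x + 1 /\ a.2 = y) -> ~ (b.1 = x + 1 /\ b.2 = y) ->
  cr a b x y = cr a b (x + 1) y.
Proof.
move=> Ha Hb; rewrite /cr.
repeat case: ifP; move=> *; lia. Qed.

Lemma cr_top (a b : gauss) (x y : int) : a.2 <= y -> b.2 <= y -> cr a b x y = 0.
Proof. move=> Ha Hb; rewrite /cr. repeat case: ifP; move=> *; lia. Qed.

Definition sig (z : nat -> gauss) (ip iq : nat) (q : gauss) : int :=
  \sum_(i < iq) cr (z i) (z i.+1) q.1 q.2 - \sum_(i < ip) cr (z i) (z i.+1) q.1 q.2
  - (if (q.2 == (z ip).2) && (q.1 < (z ip).1) then 1 else 0).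

Definition inS (z : nat -> gauss) (m : nat) (q : gauss) : bool :=
  [exists i : 'I_m.+1, z i == q].

Lemma inS_intro z m i : (i <= m)%N -> inS z m (z i).
Proof. by move=> hi; apply/existsP; exists (Ordinal (n:=m.+1) hi). Qed.

Lemma notinS z m q i : (i <= m)%N -> ~~ inS z m q -> z i <> q.
Proof. by move=> hi /negP H E; apply: H; rewrite -E inS_intro. Qed.

Lemma pair_neq (p : gauss) (x y : int) : p <> (x, y) -> ~ (p.1 = x /\ p.2 = y).
Proof. by case: p => a b /= h [E1 E2]; apply: h; rewrite E1 E2. Qed.

Lemma telesc (z : nat -> gauss) m (x y : int) N :
  (forall j, (j < m)%N -> gnorm2 (gsub (z j.+1) (z j)) = 1) ->
  ~~ inS z m (x, y + 1) -> (N <= m)%N ->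
  \sum_(i < N) cr (z i) (z i.+1) x y - \sum_(i < N) cr (z i) (z i.+1) x (y + 1)
  = inR (z N) x y - inR (z 0%N) x y.
Proof.
move=> Hs Hn; elim: N => [|N IH] hN; first by rewrite !big_ord0 !subrr.
rewrite !big_ord_recr /=.
have E := @cr_V (z N) (z N.+1) x y (Hs N hN).
have h1 := @notinS z m _ N (ltnW hN) Hn. have h2 := @notinS z m _ N.+1 hN Hn.
have B := @pair_neq _ _ _ h1. have A := @pair_neq _ _ _ h2. by rewrite opprD addrACA IH ?(ltnW hN) // E // addrC addrA subrK.
Qed.

Section S.
End S.

Lemma sig_V z m ip iq (x y : int) :
  (forall j, (j < m)%N -> gnorm2 (gsub (z j.+1) (z j)) = 1) ->
  (ip <= m)%N -> (iq <= m)%N -> (z iq).2 <= y -> y + 1 <= (z ip).2 ->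
  ~~ inS z m (x, y + 1) -> sig z ip iq (x, y) = sig z ip iq (x, y + 1).
Proof.
move=> Hs hip hiq h1 h2 Hn; rewrite /sig /=.
have E1 := telesc Hs Hn hiq.
have E2 := telesc Hs Hn hip.
move: E1 E2; rewrite /inR.
set A1 := (\sum_(i < iq) cr (z i) (z i.+1) x y). set A2 := (\sum_(i < ip) cr (z i) (z i.+1) x y). set B1 := (\sum_(i < iq) cr (z i) (z i.+1) x (y+1)). set B2 := (\sum_(i < ip) cr (z i) (z i.+1) x (y+1)).
repeat case: ifP; move=> *; lia.
Qed.

Lemma sig_H z m ip iq (x y : int) :
  (ip <= m)%N -> (iq <= m)%N ->
  ~~ inS z m (x + 1, y) -> sig z ip iq (x, y) = sig z ip iq (x + 1, y).
Proof.
move=> hip hiq Hn; rewrite /sig /=.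
have EE : forall N, (N <= m)%N -> \sum_(i < N) cr (z i) (z i.+1) x y = \sum_(i < N) cr (z i) (z i.+1) (x + 1) y.
  move=> N hN; apply: eq_bigr => i _; apply: cr_H.
    by apply: pair_neq; apply: (notinS _ Hn); apply: leq_trans (ltnW (ltn_ord i)) hN.
  by apply: pair_neq; apply: (notinS _ Hn); apply: leq_trans (ltn_ord i) hN.
rewrite (EE _ hip) (EE _ hiq).
have := pair_neq (notinS hip Hn).
by case: ifP; case: ifP => // *; lia.
Qed.

Lemma sig_top z m ip iq (x : int) :
  (forall i, (i <= m)%N -> (z i).2 <= (z ip).2) ->
  (ip <= m)%N -> (iq <= m)%N ->
  sig z ip iq (x, (z ip).2) = - (if x < (z ip).1 then 1 else 0).
Proof.
move=> Ht hip hiq; rewrite /sig /=.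
have EE : forall N, (N <= m)%N -> \sum_(i < N) cr (z i) (z i.+1) x (z ip).2 = 0.
  move=> N hN; apply: big1 => i _; apply: cr_top.
    by apply: Ht; apply: leq_trans (ltnW (ltn_ord i)) hN.
  by apply: Ht; apply: leq_trans (ltn_ord i) hN.
by rewrite (EE _ hip) (EE _ hiq) eqxx /= subrr sub0r.
Qed.

Lemma sig_adj z m ip iq (p q : gauss) :
  (forall j, (j < m)%N -> gnorm2 (gsub (z j.+1) (z j)) = 1) ->
  (ip <= m)%N -> (iq <= m)%N -> gnorm2 (gsub q p) = 1 ->
  ~~ inS z m p -> ~~ inS z m q ->
  (z iq).2 <= p.2 <= (z ip).2 -> (z iq).2 <= q.2 <= (z ip).2 ->
  sig z ip iq p = sig z ip iq q.
Proof.
move=> Hs hip hiq; case: p => x y; case: q => x' y' /unit_step /=.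
case=> [[-> ->]|[[-> ->]|[[-> ->]|[-> ->]]]] Hp Hq /andP[h1 h2] /andP[h3 h4].
- by apply: (sig_H (m:=m)).
- have := sig_H (z:=z) (m:=m) (ip:=ip) (iq:=iq) (x:=x-1) (y:=y) hip hiq.
  by rewrite subrK => ->.
- by apply: (sig_V (m:=m)).
- have := sig_V (z:=z) (m:=m) (ip:=ip) (iq:=iq) (x:=x) (y:=y-1) Hs hip hiq.
  rewrite subrK => -> //; lia.
Qed.

Lemma sig_path z m ip iq (u : nat -> gauss) L :
  (forall j, (j < m)%N -> gnorm2 (gsub (z j.+1) (z j)) = 1) ->
  (ip <= m)%N -> (iq <= m)%N ->
  (forall i, (i < L)%N -> gnorm2 (gsub (u i.+1) (u i)) = 1) ->
  (forall i, (i <= L)%N -> ~~ inS z m (u i) /\ (z iq).2 <= (u i).2 <= (z ip).2) ->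
  sig z ip iq (u L) = sig z ip iq (u 0%N).
Proof.
move=> Hs hip hiq; elim: L => [//|L IH] Hu Hin.
rewrite -IH; last by move=> i hi; apply: Hin; apply: ltnW.
  have [a1 a2] := Hin L (ltnW (ltnSn L)).
  have [b1 b2] := Hin L.+1 (leqnn _).
  symmetry; exact: (sig_adj Hs hip hiq (Hu L (ltnSn L))).
by move=> i hi; apply: Hu; apply: ltnW.
Qed.

Definition shift (p : gauss) (c : int) : gauss := (p.1 + c, p.2).

Lemma gsub_shift a b c : gsub (shift b c) (shift a c) = gsub b a.
Proof. by rewrite /gsub /shift /= opprD addrACA subrr addr0. Qed.

Lemma sigA z m ip iq (c : int) :
  (forall j, (j < m)%N -> gnorm2 (gsub (z j.+1) (z j)) = 1) ->
  (ip <= m)%N -> (iq <= m)%N ->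
  (forall i, (i <= m)%N -> (z i).2 <= (z ip).2) ->
  (forall i, (i <= m)%N -> (z iq).2 <= (z i).2) ->
  c != 0 ->
  (forall a b, (a <= m)%N -> (b <= m)%N -> shift (z a) c <> z b) ->
  forall a, (a <= m)%N -> sig z ip iq (shift (z a) c) = if c < 0 then -1 else 0.
Proof.
move=> Hs hip hiq Ht Hb hc Hn.
have key : forall a, (a <= m)%N -> sig z ip iq (shift (z a) c) = sig z ip iq (shift (z 0%N) c).
  move=> a ha; apply: (sig_path (m:=m) (u := fun i => shift (z i) c)) => //.
    by move=> i hi; rewrite gsub_shift; apply: Hs; apply: leq_trans hi ha.
  move=> i hi; have him : (i <= m)%N by apply: leq_trans hi ha.
  split; last by rewrite /shift /= Ht // Hb.
  apply/existsP => -[b /eqP E]; apply: (Hn i b him (ltn_ord b)); by rewrite E.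
move=> a ha; rewrite key // -(key ip hip) /shift.
rewrite (sig_top (m:=m)) //.
by rewrite gtrDl; case: ifP.
Qed.

Lemma shift_inv (p q : gauss) c : shift p c = q -> shift q (- c) = p.
Proof. by move=> <-; rewrite /shift /= addrK; case: p. Qed.

Lemma shiftA (p : gauss) a b : shift (shift p a) b = shift p (a + b).
Proof. by rewrite /shift /= addrA. Qed.

Lemma noeq_nat z m ip iq (dd : int) :
  (forall j, (j < m)%N -> gnorm2 (gsub (z j.+1) (z j)) = 1) ->
  (ip <= m)%N -> (iq <= m)%N ->
  (forall i, (i <= m)%N -> (z i).2 <= (z ip).2) ->
  (forall i, (i <= m)%N -> (z iq).2 <= (z i).2) ->
  0 < dd ->
  (forall a b, (a <= m)%N -> (b <= m)%N -> shift (z a) dd <> z b) ->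
  forall j : nat, (0 < j)%N -> forall a b, (a <= m)%N -> (b <= m)%N ->
    shift (z a) (j%:Z * dd) <> z b.
Proof.
move=> Hs hip hiq Ht Hb hd H1; elim=> [//|j IH] _.
case: j IH => [|j] IH; first by move=> a b ha hb; rewrite mul1r; apply: H1.
have IH' := IH isT.
move=> a b ha hb E.
have hneg : forall a' b', (a' <= m)%N -> (b' <= m)%N -> shift (z a') (- (j.+1%:Z * dd)) <> z b'.
  move=> a' b' ha' hb' E'; apply: (IH' b' a' hb' ha').
  by rewrite -(opprK (j.+1%:Z * dd)); apply: shift_inv.
have c1 : - (j.+1%:Z * dd) != 0 by rewrite oppr_eq0 mulf_eq0 negb_or; apply/andP; split => //; lia.
have c2 : dd != 0 by lia.
have A1 := sigA Hs hip hiq Ht Hb c1 hneg hb.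
have A2 := sigA Hs hip hiq Ht Hb c2 H1 ha.
have : shift (z b) (- (j.+1%:Z * dd)) = shift (z a) dd.
  rewrite -E shiftA; congr shift.
  rewrite !intS !mulrDl mul1r; set t := _ * dd; lia.
move=> EE; move: A1 A2; rewrite EE.
have -> : (- (j.+1%:Z * dd) < 0) = true by rewrite oppr_lt0; apply: mulr_gt0 => //.
have -> : (dd < 0) = false by lia.
by move=> ->.
Qed.

Lemma noeq z m ip iq (dd : int) :
  (forall j, (j < m)%N -> gnorm2 (gsub (z j.+1) (z j)) = 1) ->
  (ip <= m)%N -> (iq <= m)%N ->
  (forall i, (i <= m)%N -> (z i).2 <= (z ip).2) ->
  (forall i, (i <= m)%N -> (z iq).2 <= (z i).2) ->
  0 < dd ->
  (forall a b, (a <= m)%N -> (b <= m)%N -> shift (z a) dd <> z b) ->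
  forall j : int, j != 0 -> forall a b, (a <= m)%N -> (b <= m)%N ->
    shift (z a) (j * dd) <> z b.
Proof.
move=> Hs hip hiq Ht Hb hd H1 j hj a b ha hb.
have N := noeq_nat Hs hip hiq Ht Hb hd H1.
case: j hj => [j|j] hj.
  by apply: N => //; case: j hj.
move=> E; apply: (N j.+1 isT b a hb ha).
rewrite -E /shift /= NegzE mulNr subrK; by case: (z a).
Qed.

Lemma argmax (f : nat -> int) m : exists i, (i <= m)%N /\ forall j, (j <= m)%N -> f j <= f i.
Proof.
elim: m => [|m [i [hi H]]]; first by exists 0%N; split => // j; rewrite leqn0 => /eqP ->.
case: (lerP (f m.+1) (f i)) => h.
  exists i; split; first exact: leqW.
  by move=> j; rewrite leq_eqVlt ltnS => /orP[/eqP ->|/H].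
exists m.+1; split => // j; rewrite leq_eqVlt ltnS => /orP[/eqP ->//|/H hj].
by apply: le_trans hj (ltW h).
Qed.

Lemma gn1 (p q : gauss) :
  ((q.1 - p.1 = 1 \/ q.1 - p.1 = -1) /\ q.2 - p.2 = 0) \/
  (q.1 - p.1 = 0 /\ (q.2 - p.2 = 1 \/ q.2 - p.2 = -1)) -> gnorm2 (gsub q p) = 1.
Proof. by rewrite /gnorm2 /gsub /= => -[[[->|->] ->]|[-> [->|->]]]. Qed.

Lemma path_ex (N : nat) (P0 P1 : gauss) (lo hi : int) :
  `|P1.1 - P0.1| + `|P1.2 - P0.2| = N%:Z -> lo <= P0.2 <= hi -> lo <= P1.2 <= hi ->
  exists u : nat -> gauss, [/\ u 0%N = P0, u N = P1,
     (forall i, (i < N)%N -> gnorm2 (gsub (u i.+1) (u i)) = 1) &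
     (forall i, (i <= N)%N -> lo <= (u i).2 <= hi)].
Proof.
elim: N P0 => [|N IH] P0 HN H0 H1.
  exists (fun _ => P0); split => //.
  by case: P0 P1 HN {H0 H1} => [a b] [c e] /= HN; congr (_, _); lia.
set Q : gauss := if P0.1 < P1.1 then (P0.1 + 1, P0.2) else if P1.1 < P0.1 then (P0.1 - 1, P0.2)
  else if P0.2 < P1.2 then (P0.1, P0.2 + 1) else (P0.1, P0.2 - 1).
have HQ : `|P1.1 - Q.1| + `|P1.2 - Q.2| = N%:Z /\ lo <= Q.2 <= hi /\ gnorm2 (gsub Q P0) = 1.
  rewrite /Q {Q}.
  repeat case: ifP => /= ?; (split; [lia | split; [lia | apply: gn1 => /=; lia]]).
case: HQ => [HQ1 [HQ2 HQ3]].
have [u [u0 uN us ui]] := IH Q HQ1 HQ2 H1.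
exists (fun i => if i is i'.+1 then u i' else P0); split => //.
  by case=> [|i] hin /=; [rewrite u0 | apply: us].
by case=> [|i] hin //=; apply: ui.
Qed.

Lemma php (A B : nat) (P : nat -> nat -> bool) :
  (forall j, (j < A)%N -> exists i, (i < B)%N /\ P j i) ->
  (forall i j j', (j < A)%N -> (j' < A)%N -> P j i -> P j' i -> j = j') ->
  (A <= B)%N.
Proof.
move=> H1 H2.
set f := fun j => find (P j) (iota 0 B).
have hf : forall j, (j < A)%N -> (f j < B)%N /\ P j (f j).
  move=> j hj; have [i [hi Pi]] := H1 j hj.
  have hh : has (P j) (iota 0 B) by apply/hasP; exists i => //; rewrite mem_iota.
  have := has_find (P j) (iota 0 B); rewrite hh size_iota => hl.
  split => //.
  by have := nth_find 0%N hh; rewrite nth_iota ?add0n.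
have U : uniq (map f (iota 0 A)).
  rewrite map_inj_in_uniq ?iota_uniq // => j j'; rewrite !mem_iota !add0n => /andP[_ hj] /andP[_ hj'] E.
  have [_ p1] := hf j hj; have [_ p2] := hf j' hj'.
  by apply: (H2 (f j) j j') => //; rewrite E.
suff : (size (map f (iota 0 A)) <= size (iota 0 B))%N by rewrite size_map !size_iota.
apply: uniq_leq_size U _ => i /mapP [j]; rewrite mem_iota add0n => /andP[_ hj] ->.
by rewrite mem_iota add0n; have [-> _] := hf j hj.
Qed.

Lemma inS_ex z m q : inS z m q -> exists b, (b <= m)%N /\ z b = q.
Proof. by move=> /existsP [b /eqP E]; exists b; split => //; rewrite -ltnS. Qed.

Unset Implicit Arguments.
Unset Strict Implicit.

Theorem mainTheorem5 (n d : nat) (h : int) (m : nat) (z : nat -> gauss) :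
  (0 < d)%N ->
  (forall j : nat, (j < m)%N -> gnorm2 (gsub (z j.+1) (z j)) = 1) ->
  (exists j1 j2 : nat, [/\ (j1 <= m)%N, (j2 <= m)%N &
       gsub (z j2) (z j1) = (n%:Z, h)]) ->
  `|rq n d| + `|h| + 1 <= kq n d ->
  exists j3 j4 : nat, [/\ (j3 <= m)%N, (j4 <= m)%N &
       gsub (z j3) (z j4) = (d%:Z, 0)].
Proof.
move=> Hd Hs [j1 [j2 [hj1 hj2 Hw]]] Hk.
case: (boolP [exists a : 'I_m.+1, exists b : 'I_m.+1, gsub (z a) (z b) == (d%:Z, 0)]).
  move=> /existsP [a /existsP [b /eqP E]].
  by exists a, b; split => //; rewrite -ltnS.
move=> Hno; exfalso.
set dd : int := d%:Z.
have hd : 0 < dd by rewrite /dd ltz_nat.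
have H1 : forall a b, (a <= m)%N -> (b <= m)%N -> shift (z a) dd <> z b.
  move=> a b ha hb E; move/negP: Hno; apply.
  apply/existsP; exists (Ordinal (n:=m.+1) hb); apply/existsP; exists (Ordinal (n:=m.+1) ha).
  by rewrite /= -E /gsub /shift /= addrAC subrr add0r subrr.
have [ip [hip Ht]] := argmax (fun i => (z i).2) m.
have [iq [hiq Hb']] := argmax (fun i => - (z i).2) m.
have Hb : forall i, (i <= m)%N -> (z iq).2 <= (z i).2.
  by move=> i hi; have := Hb' i hi => /=; lia.
have Hne := noeq Hs hip hiq Ht Hb hd H1.
have sA : forall j : int, j != 0 -> forall a, (a <= m)%N ->
    sig z ip iq (shift (z a) (j * dd)) = if j < 0 then -1 else 0.
  move=> j hj a ha.
  have hc : j * dd != 0 by rewrite mulf_eq0 negb_or hj /=; lia.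
  by rewrite (sigA Hs hip hiq Ht Hb hc (Hne j hj) ha) pmulr_llt0.
set K := kq n d in Hk. set r := rq n d in Hk.
have hK : 1 <= K by lia.
set l := (`|r|%N + `|h|%N)%N.
have hl : l%:Z = `|r| + `|h| by rewrite /l PoszD !abszE.
have Hw1 : (z j2).1 - (z j1).1 = n%:Z /\ (z j2).2 - (z j1).2 = h.
  by move: Hw; rewrite /gsub => -[-> ->].
have hr : r = n%:Z - K * dd by [].
have p1 : `|(shift (z j1) (K * dd)).1 - (z j2).1| + `|(shift (z j1) (K * dd)).2 - (z j2).2| = l%:Z.
  rewrite /shift /= hl. move: hr; set KD := K * dd => hr. case: Hw1 => ? ?; lia.
have p2 : (z iq).2 <= (z j2).2 <= (z ip).2.
  by apply/andP; split; [exact: Hb | exact: Ht].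
have p3 : (z iq).2 <= (shift (z j1) (K * dd)).2 <= (z ip).2.
  by apply/andP; split; [exact: Hb | exact: Ht].
have [u [u0 ul us ui]] := path_ex p1 p2 p3.
have hl1 : (0 < l)%N.
  rewrite lt0n; apply/negP => /eqP l0.
  have : u l = u 0%N by rewrite l0.
  rewrite ul u0 => E; apply: (Hne K _ j1 j2) => //; lia.
set KN := `|K|%N.
have hKN : KN%:Z = K by rewrite /KN abszE; lia.
pose P := fun j i => inS z m (shift (u i.+1) (- ((j.+1)%:Z * dd))).
have Hph := @php (KN - 1)%N (l - 1)%N P.
have : ((KN - 1) <= (l - 1))%N.
  apply: Hph.
  - move=> j hj.
    case: (boolP [exists i : 'I_(l - 1), P j i]) => [/existsP [i Pi]|Hn]; first by exists i.
    exfalso.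
    set J : int := (j.+1)%:Z.
    have hJ1 : 1 <= J by rewrite /J; lia.
    have hJ2 : J <= K - 1 by rewrite /J; lia.
    pose v := fun i => shift (u i) (- (J * dd)).
    have Key : sig z ip iq (v l) = sig z ip iq (v 0%N).
      apply: (sig_path (m:=m)) => //.
      + by move=> i hi; rewrite /v gsub_shift; apply: us.
      + move=> i hi; split; last by rewrite /v /shift /=; apply: ui.
        apply/negP => /inS_ex [b [hb Eb]].
        case: i hi Eb => [|i] hi Eb.
          move: Eb; rewrite /v u0 -mulNr => Eb.
          by apply: (Hne (- J) _ j2 b) => //; lia.
        case: (ltnP i (l - 1)) => hil.
          move/negP: Hn; apply; apply/existsP; exists (Ordinal hil).
          by rewrite /P /=; move: Eb; rewrite /v => <-; apply: inS_intro.
        have il : i.+1 = l by lia.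
        move: Eb; rewrite /v il ul shiftA -mulrBl => Eb.
        by apply: (Hne (K - J) _ j1 b) => //; lia.
    move: Key; rewrite /v ul u0 shiftA -mulrBl -mulNr.
    have hKJ : K - J != 0 by lia.
    have hJ0 : - J != 0 by lia.
    rewrite (sA _ hKJ) // (sA _ hJ0) //.
    have -> : (K - J < 0) = false by lia.
    have -> : (- J < 0) = true by lia.
    by [].
  - move=> i j j' hj hj' /inS_ex [a [ha Ea]] /inS_ex [b [hb Eb]].
    case: (eqVneq j j') => // hne; exfalso.
    apply: (Hne ((j.+1)%:Z - (j'.+1)%:Z) _ a b) => //; first by lia.
    rewrite Ea Eb shiftA mulrBl; congr shift.
    set X := _ * dd; set Y := _ * dd; lia.
lia.
Qed.
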